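(* Let $K$ be a number field with ring of integers $\mathcal O_K$. Then the ring $\mathrm{Int}(\mathcal O_K)=\{f\in K[x]: f(\mathcal O_K)\subseteq\mathcal O_K\}$ has no prime element.
   Context: A prime element of a domain is a non-zero non-unit $p$ such that $p\mid ab$ implies $p\mid a$ or $p\mid b$. *)

(* Defs.v *)
From HB Require Import structures.
From mathcomp Require Import all_boot all_order all_algebra all_field.
Set Implicit Arguments. Unset Strict Implicit. Unset Printing Implicit Defensive.
Import GRing.Theory.
Local Open Scope ring_scope.

(* A number field is a finite-dimensional field extension K of Q:
   in MathComp, K : fieldExtType rat (finite dimension is built in). *)

Definition in_OK (K : fieldExtType rat) (x : K) : Prop :=
  exists p : {poly int}, p \is monic /\ root (map_poly (fun z : int => z%:~R) p) x.

Definition in_IntOK (K : fieldExtType rat) (f : {poly K}) : Prop :=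
  forall a : K, in_OK a -> in_OK f.[a].

Definition IntOK_dvd (K : fieldExtType rat) (f g : {poly K}) : Prop :=
  exists h : {poly K}, in_IntOK h /\ g = f * h.

Definition IntOK_unit (K : fieldExtType rat) (f : {poly K}) : Prop :=
  exists h : {poly K}, in_IntOK h /\ f * h = 1.

Definition IntOK_prime (K : fieldExtType rat) (p : {poly K}) : Prop :=
  [/\ in_IntOK p, p <> 0, ~ IntOK_unit p &
      forall a b : {poly K}, in_IntOK a -> in_IntOK b ->
        IntOK_dvd p (a * b) -> IntOK_dvd p a \/ IntOK_dvd p b].

(* Main.v *)
From Stdlib Require Import Classical.
From HB Require Import structures.
From mathcomp Require Import all_boot all_order all_algebra all_field.
Require Import Defs.
From mathcomp Require Import zify ring.
Import Order.TTheory GRing.Theory Num.Theory.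
Set Implicit Arguments. Unset Strict Implicit. Unset Printing Implicit Defensive.
Local Open Scope ring_scope.

Section Mat.
Variables (K : fieldExtType rat) (n : nat) (b : n.+1.-tuple K).
Hypothesis hb : basis_of fullv b.

Definition Mx (y : K) : 'M[rat]_n.+1 := \matrix_(i, j) coord b j (b`_i * y).

Lemma MxD x y : Mx (x + y) = Mx x + Mx y.
Proof. by apply/matrixP=> i j; rewrite !mxE mulrDr linearD. Qed.

Lemma MxZ a y : Mx (a *: y) = a *: Mx y.
Proof. by apply/matrixP=> i j; rewrite !mxE -scalerAr linearZ. Qed.

Lemma Mx_sum I (r : seq I) P (F : I -> K) :
  Mx (\sum_(i <- r | P i) F i) = \sum_(i <- r | P i) Mx (F i).
Proof.
elim/big_rec2: _ => [|i x y _ <-]; last by rewrite MxD.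
by apply/matrixP=> i j; rewrite !mxE mulr0 linear0.
Qed.

Lemma MxM x y : Mx (x * y) = Mx x *m Mx y.
Proof.
apply/matrixP=> i j; rewrite !mxE.
rewrite mulrA {1}(coord_basis hb (memvf (b`_i * x))).
rewrite mulr_suml linear_sum /=; apply: eq_bigr => k _.
by rewrite !mxE -scalerAl linearZ.
Qed.

Lemma Mx1 : Mx 1 = 1%:M.
Proof.
apply/matrixP=> i j; by rewrite !mxE mulr1 coord_free ?(basis_free hb) // eq_sym.
Qed.

Lemma MxA a : Mx (a%:A) = a%:M.
Proof. by rewrite MxZ Mx1 scalemx1. Qed.

Lemma Mx0 : Mx 0 = 0.
Proof. by rewrite -(scale0r 1) MxZ scale0r. Qed.

Definition Nm y := \det (Mx y).

Lemma NmM x y : Nm (x * y) = Nm x * Nm y.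
Proof. by rewrite /Nm MxM det_mulmx. Qed.

Lemma Nm1 : Nm 1 = 1.
Proof. by rewrite /Nm Mx1 det1. Qed.

Lemma Nm0 : Nm 0 = 0.
Proof. by rewrite /Nm Mx0 det0. Qed.

Lemma NmA a : Nm a%:A = a ^+ n.+1.
Proof. by rewrite /Nm MxA det_scalar. Qed.

Lemma Nm_neq0 y : y != 0 -> Nm y != 0.
Proof.
move=> y0; apply/eqP=> h.
by have := NmM y y^-1; rewrite divff // Nm1 h mul0r; apply/eqP; rewrite oner_eq0.
Qed.

Lemma Nm_inv y : y != 0 -> Nm y * Nm y^-1 = 1.
Proof. by move=> y0; rewrite -NmM divff // Nm1. Qed.

Lemma Mx_eq0 y : Mx y = 0 -> y = 0.
Proof.
move=> h; apply/eqP; apply/negPn/negP=> /Nm_neq0.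
by rewrite /Nm h det0 eqxx.
Qed.

Lemma Mx_horner (q : {poly rat}) y :
  Mx (map_poly (in_alg K) q).[y] = horner_mx (Mx y) q.
Proof.
elim/poly_ind: q => [|q c IH].
  by rewrite map_poly0 horner0 rmorph0 Mx0.
rewrite rmorphD rmorphM /= map_polyX map_polyC /= hornerD hornerM hornerX hornerC.
rewrite MxD MxM IH rmorphD rmorphM /= horner_mx_X horner_mx_C.
by rewrite MxA.
Qed.

End Mat.

Section OK.
Variable K : fieldExtType rat.

Lemma OKP (x : K) : in_OK x <-> integralOver (intr : {rmorphism int -> K}) x.
Proof. by split; [case=> p [h1 h2]; exists p | case=> p h1 h2; exists p]. Qed.

Lemma OK_add (x y : K) : in_OK x -> in_OK y -> in_OK (x + y).
Proof. by move=> /OKP hx /OKP hy; apply/OKP; apply: integral_add. Qed.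
Lemma OK_mul (x y : K) : in_OK x -> in_OK y -> in_OK (x * y).
Proof. by move=> /OKP hx /OKP hy; apply/OKP; apply: integral_mul. Qed.
Lemma OK_opp (x : K) : in_OK x -> in_OK (- x).
Proof. by move=> /OKP hx; apply/OKP; apply: integral_opp. Qed.
Lemma OK_sub (x y : K) : in_OK x -> in_OK y -> in_OK (x - y).
Proof. by move=> hx hy; apply: OK_add => //; apply: OK_opp. Qed.
Lemma OK_int (z : int) : in_OK (z%:~R : K).
Proof. by apply/OKP; apply: (integral_id (intr : {rmorphism int -> K})). Qed.
Lemma OK_nat (m : nat) : in_OK (m%:R : K).
Proof. by have := OK_int m; rewrite pmulrn. Qed.
Lemma OK0 : in_OK (0 : K). Proof. exact: (OK_nat 0). Qed.
Lemma OK1 : in_OK (1 : K). Proof. exact: (OK_nat 1). Qed.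
Lemma OK_exp (x : K) k : in_OK x -> in_OK (x ^+ k).
Proof.
move=> hx; elim: k => [|k IH]; first by rewrite expr0; exact: OK1.
by rewrite exprS; apply: OK_mul.
Qed.
Lemma OK_horner (q : {poly int}) (x : K) :
  in_OK x -> in_OK (map_poly intr q).[x].
Proof.
move=> /OKP hx; apply/OKP; apply: integral_horner => //.
move=> z /(nthP 0) [i _ <-]; rewrite coef_map /=.
exact: (integral_id (intr : {rmorphism int -> K})).
Qed.

Lemma natr_neq0 (N : nat) : (0 < N)%N -> (N%:R : K) != 0.
Proof. by move=> N0; rewrite -(rmorph_nat (in_alg K)) fmorph_eq0 pnatr_eq0 -lt0n. Qed.

End OK.

Section Char.
Variables (K : fieldExtType rat) (n : nat) (b : n.+1.-tuple K).
Hypothesis hb : basis_of fullv b.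

Lemma charMx_int y : in_OK y -> char_poly (Mx b y) \is a polyOver Num.int.
Proof.
case=> g [mg rg].
set A := Mx b y.
pose gq : {poly rat} := map_poly intr g.
have hA : horner_mx A gq = 0.
  rewrite -Mx_horner // -map_poly_comp.
  have -> : map_poly (in_alg K \o intr) g = map_poly intr g.
    apply: eq_map_poly => z /=.
    by rewrite -[RHS](rmorph_int (in_alg K)).
  by rewrite (rootP rg) Mx0.
pose A' := map_mx (ratr : rat -> algC) A.
have hA' : horner_mx A' (map_poly ratr gq) = 0.
  by rewrite -map_horner_mx hA map_mx0.
have dv := mxminpoly_min hA'.
have [r Dr] := closed_field_poly_normal (char_poly A').
have lc : lead_coef (char_poly A') = 1 by apply/monicP; exact: char_poly_monic.
rewrite lc scale1r in Dr.
have rAint z : z \in r -> z \in Aint.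
  move=> zr.
  have : root (char_poly A') z by rewrite Dr root_prod_XsubC.
  rewrite -root_mxminpoly => /(root_dvdp dv).
  rewrite /gq -map_poly_comp => hz.
  apply: (root_monic_Aint (p := map_poly intr g)).
  - move: hz; congr (root _ _); apply: eq_map_poly => z' /=; exact: rmorph_int.
  - exact: monic_map.
  - by apply/polyOverP => i; rewrite coef_map /= rpred_int.
have hP : char_poly A' \is a polyOver Aint.
  rewrite Dr; elim: (r) rAint {Dr} => [|z r' IH] hr.
    by rewrite big_nil; exact: rpred1.
  rewrite big_cons rpredM //; last by apply: IH => z' hz'; apply: hr; rewrite inE hz' orbT.
  by rewrite polyOverXsubC hr // inE eqxx.
apply/polyOverP => i.
have := polyOverP hP i.
rewrite /A' -map_char_poly coef_map /= => /(Cint_rat_Aint (Crat_rat _)).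
by rewrite Cint_rat.
Qed.

End Char.

Section Char2.
Variables (K : fieldExtType rat) (n : nat) (b : n.+1.-tuple K).
Hypothesis hb : basis_of fullv b.

Lemma map_intr_comp (q : {poly int}) :
  map_poly (in_alg K) (map_poly intr q) = map_poly intr q.
Proof.
rewrite -map_poly_comp; apply: eq_map_poly => z /=.
by rewrite -[RHS](rmorph_int (in_alg K)).
Qed.

Lemma OK_char y : in_OK y -> exists chi : {poly int},
  [/\ chi \is monic, size chi = n.+2, root (map_poly intr chi) y &
      (chi`_0)%:~R = (-1) ^+ n.+1 * Nm b y].
Proof.
move=> hy; have hc := charMx_int hb hy.
set cp := char_poly (Mx b y) in hc.
pose chi := map_poly (fun x : rat => Num.floor x) cp.
have Echi : map_poly intr chi = cp by rewrite floorpK.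
exists chi; split.
- apply/monicP; apply: (@intr_inj rat).
  have := lead_coef_map_inj (@intr_inj rat) (mulr0z 1) chi.
  rewrite Echi => <-; apply/monicP; exact: char_poly_monic.
- by rewrite -(size_map_inj_poly (@intr_inj rat)) // Echi size_char_poly.
- apply/rootP; rewrite -map_intr_comp Echi; apply: (Mx_eq0 hb).
  by rewrite Mx_horner // Cayley_Hamilton.
- have := congr1 (fun p : {poly rat} => p`_0) Echi.
  rewrite coef_map /= char_poly_det /Nm => ->.
  by [].
Qed.

Lemma Nm_int y : in_OK y -> Nm b y \is a Num.int.
Proof.
move=> hy; have [chi [_ _ _ h]] := OK_char hy.
have -> : Nm b y = (-1) ^+ n.+1 * (chi`_0)%:~R.
  by rewrite h mulrA -exprMn mulrNN mulr1 expr1n mul1r.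
by rewrite rpredM ?rpred_int // rpredX // rpredN rpred1.
Qed.

Lemma OK_div_nat (y : K) : in_OK y -> y != 0 ->
  exists N : nat, (0 < N)%N /\ in_OK (N%:R / y).
Proof.
move=> hy y0; have [chi [_ _ hr h]] := OK_char hy.
set c := chi`_0 in h.
have c0 : c != 0.
  apply/eqP=> c0; move: h; rewrite c0 mulr0z => /esym/eqP.
  by rewrite mulf_eq0 signr_eq0 /= (negPf (Nm_neq0 hb y0)).
have Ec : chi = c%:P + drop_poly 1 chi * 'X.
  rewrite -{1}(poly_take_drop 1 chi) expr1; congr (_ + _).
  by apply/polyP=> i; rewrite coef_take_poly coefC; case: i.
have hq : in_OK (c%:~R / y).
  have : (map_poly intr chi).[y] = 0 by apply/rootP.
  rewrite {1}Ec rmorphD rmorphM /= map_polyC map_polyX /= hornerD hornerM hornerX hornerC.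
  move/eqP; rewrite addr_eq0 => /eqP ->.
  rewrite mulNr -mulrA divff // mulr1; apply: OK_opp; exact: OK_horner.
exists `|c|%N; split; first by rewrite absz_gt0.
have -> : (`|c|%N%:R : K) = (-1) ^+ (c < 0)%R * c%:~R.
  by rewrite pmulrn abszEsign intrM intr_sign.
by rewrite -mulrA; apply: OK_mul => //; rewrite -intr_sign; exact: OK_int.
Qed.

End Char2.

Section Uni.
Variables (K : fieldExtType rat) (n : nat) (b : n.+1.-tuple K).
Hypothesis hb : basis_of fullv b.
Variable N : nat.
Hypothesis N0 : (0 < N)%N.

Let E (x : K) := in_OK (x / N%:R).

Let E_add x y : E x -> E y -> E (x + y).
Proof. by rewrite /E mulrDl; apply: OK_add. Qed.
Let E_opp x : E x -> E (- x).
Proof. by rewrite /E mulNr; apply: OK_opp. Qed.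
Let E_mul z x : in_OK z -> E x -> E (z * x).
Proof. by rewrite /E -mulrA; apply: OK_mul. Qed.

Definition MM := #|{: {ffun 'I_n.+1 -> 'I_N.+1}}|.

Lemma key_step (alpha : K) (chi : {poly int}) : chi \is monic -> size chi = n.+2 ->
  root (map_poly intr chi) alpha -> in_OK alpha ->
  exists i j : nat, [/\ (i < j)%N, (j <= MM)%N & E (alpha ^+ i - alpha ^+ j)].
Proof.
move=> mchi schi rchi ha.
have chi0 : chi != 0 by rewrite -size_poly_gt0 schi.
pose rem (k : nat) := 'X^k %% chi.
pose key (k : 'I_MM.+1) : {ffun 'I_n.+1 -> 'I_N.+1} :=
  [ffun c : 'I_n.+1 => inord `|((rem k)`_c %% (N : int))%Z|%N].
have hE (i j : nat) : (forall c : 'I_n.+1, `|((rem i)`_c %% (N : int))%Z|%N =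
                          `|((rem j)`_c %% (N : int))%Z|%N) ->
   E (alpha ^+ i - alpha ^+ j).
  move=> hc.
  have Nz : (N : int) != 0 by rewrite eqz_nat -lt0n.
  pose D := rem i - rem j.
  have sD : (size D <= n.+1)%N.
    have h k : (size (rem k) <= n.+1)%N by rewrite -ltnS -schi ltn_modpN0.
    rewrite /D; apply: (leq_trans (size_add _ _)); rewrite size_opp geq_max.
    by rewrite !h.
  have dD : D \is a polyOver (dvdz (N : int)).
    apply/polyOverP => c; case: (ltnP c n.+1) => hcn; last first.
      by rewrite nth_default ?(leq_trans sD) // rpred0.
    have := hc (Ordinal hcn) => /= /eqP.
    rewrite -eqz_nat !abszE !ger0_norm ?modz_ge0 ?Nz // => /eqP hm.
    by rewrite /D coefB -eqz_mod_dvd; apply/eqP.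
  have Exp : 'X^i - 'X^j = ('X^i %/ chi - 'X^j %/ chi) * chi + (N : int) *: map_poly (divz^~ (N : int)) D.
    rewrite map_poly_divzK // /D /rem.
    rewrite {1}(Pdiv.IdomainMonic.divp_eq mchi 'X^i) {1}(Pdiv.IdomainMonic.divp_eq mchi 'X^j).
    by rewrite mulrBl opprD addrACA.
  have := congr1 (fun p => (map_poly intr p).[alpha]) Exp.
  rewrite /= !rmorphB !rmorphD !rmorphM /= !rmorphXn /= !map_polyX map_polyZ.
  rewrite !hornerE (rootP rchi) mulr0 add0r /= => ->.
  rewrite /E -pmulrn mulrC mulrA mulVf ?mul1r; first exact: OK_horner.
  exact: natr_neq0.
have [/injectiveP inj | /injectivePn [x [y xy kxy]]] := boolP (injectiveb key).
  by have := leq_card _ inj; rewrite card_ord ltnn.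
have Nz : (N : int) != 0 by rewrite eqz_nat -lt0n.
have lt (z : int) : (`|(z %% (N : int))%Z|%N < N.+1)%N.
  rewrite ltnS -lez_nat abszE ger0_norm ?modz_ge0 ?Nz //.
  by apply: ltW; rewrite ltz_pmod // ltz_nat.
have hxy : forall c : 'I_n.+1, `|((rem x)`_c %% (N : int))%Z|%N =
                          `|((rem y)`_c %% (N : int))%Z|%N.
  move=> c; move/ffunP: kxy => /(_ c); rewrite !ffunE => /(congr1 val).
  by rewrite /= !inordK.
have := hE _ _ hxy.
case: (ltngtP x y) => [hl|hl|/val_inj he]; last by rewrite he eqxx in xy.
  by move=> h; exists x, y; split => //; rewrite -ltnS.
move=> h; exists y, x; split => //; first by rewrite -ltnS.
by rewrite -opprB; apply: E_opp.
Qed.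

Lemma U_lemma : exists k m : nat, (0 < m)%N /\ (forall alpha : K, in_OK alpha -> in_OK (alpha ^+ k * (alpha ^+ m - 1) / N%:R)).
Proof.
exists MM, MM`!; split; first exact: fact_gt0.
move=> alpha ha; have [chi [mchi schi rchi _]] := OK_char hb ha.
have [i [j [ij jM hij]]] := key_step mchi schi rchi ha.
set t := (j - i)%N.
have tpos : (0 < t)%N by rewrite subn_gt0.
have hper s : E (alpha ^+ (i + s * t) - alpha ^+ i).
  elim: s => [|s IH]; first by rewrite mul0n addn0 subrr /E mul0r; exact: OK0.
  have -> : alpha ^+ (i + s.+1 * t) - alpha ^+ i =
     alpha ^+ t * (alpha ^+ (i + s * t) - alpha ^+ i) + (alpha ^+ j - alpha ^+ i).
    have tj : (t + i = j)%N by rewrite /t; lia.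
    rewrite mulrBr -!exprD tj addrA subrK; congr (_ ^+ _ - _).
    rewrite /t; lia.
  apply: E_add; first by apply: E_mul => //; exact: OK_exp.
  by rewrite -opprB; apply: E_opp.
have [s hs] : exists s, MM`! = (s * t)%N.
  apply/dvdnP; apply: dvdn_fact; rewrite tpos /t; lia.
have -> : alpha ^+ MM * (alpha ^+ MM`! - 1) =
    alpha ^+ (MM - i) * (alpha ^+ (i + s * t) - alpha ^+ i).
  rewrite !mulrBr mulr1 -!exprD hs; congr (_ ^+ _ - _ ^+ _); lia.
by apply: E_mul; [exact: OK_exp | exact: hper].
Qed.

End Uni.

Section Schur.
Variables (K : fieldExtType rat) (n : nat) (b : n.+1.-tuple K).
Hypothesis hb : basis_of fullv b.

Definition NP (f : {poly K}) : {poly rat} :=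
  \det (\matrix_(i, j) \poly_(l < size f) (Mx b f`_l i j)).

Lemma NP_eval f r : (NP f).[r] = Nm b (f.[r%:A]).
Proof.
rewrite /NP -horner_evalE -det_map_mx /Nm; congr (\det _).
apply/matrixP => i j.
rewrite [in RHS]horner_coef (Mx_sum b) summxE.
rewrite [in LHS]mxE [in LHS]mxE.
transitivity ((\poly_(l < size f) Mx b f`_l i j).[r]); first by [].
rewrite horner_poly; apply: eq_bigr => l _.
by rewrite exprZn expr1n mulr_algr MxZ [in RHS]mxE mulrC.
Qed.

Lemma rev_eval (p : {poly K}) (x : K) : x != 0 ->
  (\poly_(l < size p) p`_((size p).-1 - l)).[x^-1] * x ^+ (size p).-1 = p.[x].
Proof.
move=> x0; rewrite horner_poly horner_coef mulr_suml.
rewrite (reindex_inj rev_ord_inj) /=; apply: eq_bigr => l _.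
have hl : (l < size p)%N := ltn_ord l.
have -> : ((size p).-1 - (size p - l.+1) = l)%N by lia.
rewrite -mulrA; congr (_ * _).
have -> : ((size p).-1 = (size p - l.+1) + l)%N by lia.
by rewrite exprD mulrA exprVn mulVf ?mul1r // expf_neq0.
Qed.

Lemma int_unit (x y : rat) : x \is a Num.int -> y \is a Num.int -> x * y = 1 ->
  x ^+ 2 = 1.
Proof.
move=> hx hy hxy.
have x0 : x != 0 by apply/eqP=> x0; move: hxy; rewrite x0 mul0r => /eqP; rewrite eq_sym oner_eq0.
have y0 : y != 0 by apply/eqP=> y0; move: hxy; rewrite y0 mulr0 => /eqP; rewrite eq_sym oner_eq0.
have hx1 := norm_intr_ge1 hx x0; have hy1 := norm_intr_ge1 hy y0.
have hn : `|x| * `|y| = 1 by rewrite -normrM hxy normr1.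
have ex : `|x| = 1.
  apply/eqP; rewrite eq_le hx1 andbT.
  by rewrite -hn ler_peMr // (le_trans ler01 hx1).
by rewrite -intr_normK // ex expr1n.
Qed.

Lemma schur (p : {poly K}) : in_IntOK p -> (1 < size p)%N ->
  exists a : nat, p.[a%:R] != 0 /\ ~ in_OK (p.[a%:R])^-1.
Proof.
move=> pR sp.
apply: NNPP => hno.
have H a : p.[a%:R] = 0 \/ in_OK (p.[a%:R])^-1.
  case: (eqVneq p.[a%:R] 0) => [->|h]; first by left.
  by right; apply: NNPP => h2; apply: hno; exists a; split.
have hv a : Nm b p.[a%:R] * (Nm b p.[a%:R] ^+ 2 - 1) = 0.
  case: (eqVneq p.[a%:R] 0) => [->|u0]; first by rewrite Nm0 mul0r.
  case: (H a) => [u00|hu]; first by rewrite u00 eqxx in u0.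
  have hu0 : in_OK p.[a%:R] by apply: pR; exact: OK_nat.
  rewrite (@int_unit _ (Nm b (p.[a%:R])^-1) (Nm_int hb hu0) (Nm_int hb hu)) ?subrr ?mulr0 //.
  exact: Nm_inv.
set s := (size p).-1.
set fr := \poly_(l < size p) p`_(s - l).
set Q := NP fr.
pose F := Q * (Q ^+ 2 - 'X^(s * n.+1 * 2)%N).
have Froot a : F.[(a.+1)%:R^-1] = 0.
  set x : rat := (a.+1)%:R.
  have x0 : x != 0 by rewrite pnatr_eq0.
  have xA : (x%:A : K) = (a.+1)%:R by rewrite scaler_nat.
  have xK0 : (x%:A : K) != 0 by rewrite xA natr_neq0.
  have h3 : (x^-1)%:A = (x%:A)^-1 :> K by rewrite -!in_algE fmorphV.
  have h1 : Nm b ((x%:A : K) ^+ s) = x ^+ (s * n.+1)%N.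
    by rewrite exprZn expr1n (NmA hb) exprM.
  have h2 : Q.[x^-1] = Nm b fr.[(x%:A : K)^-1].
    rewrite /Q NP_eval; congr (Nm b fr.[_]); exact: h3.
  have e1 : Q.[x^-1] * x ^+ (s * n.+1)%N = Nm b p.[(a.+1)%:R].
    rewrite h2 -h1 -NmM //; transitivity (Nm b p.[x%:A]); first by congr (Nm b _); exact: (rev_eval p xK0).
    by congr (Nm b p.[_]); exact: xA.
  have X0 : x ^+ (s * n.+1)%N != 0 by rewrite expf_neq0.
  set v := Nm b p.[(a.+1)%:R] in e1.
  rewrite /F hornerM hornerD hornerN hornerXn !hornerE exprM exprVn.
  set q := Q.[x^-1] in e1 *; set X := x ^+ (s * n.+1)%N in e1 X0 *.
  have : (q * (q ^+ 2 - X^-1 ^+ 2)) * X ^+ 3 = v * (v ^+ 2 - 1).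
    rewrite -e1; field; exact: X0.
  rewrite hv => /eqP; rewrite mulf_eq0 expf_eq0 (negPf X0) andbF orbF.
  by move/eqP.
have F0 : F = 0.
  apply/eqP; apply/negPn/negP => Fn0.
  set rs := [seq (i.+1)%:R^-1 | i <- iota 0 (size F)] : seq rat.
  have hall : all (root F) rs.
    by apply/allP => z /mapP [i _ ->]; apply/rootP; exact: Froot.
  have hu : uniq rs.
    rewrite map_inj_uniq ?iota_uniq // => i j /invr_inj /eqP.
    by rewrite eqr_nat => /eqP [].
  have := max_poly_roots Fn0 hall hu.
  by rewrite size_map size_iota ltnn.
have sp0 : p != 0 by rewrite -size_poly_gt0 ltnW.
have Q0 : Q.[0] != 0.
  have -> : Q.[0] = Nm b fr.[0].
    rewrite /Q NP_eval; congr (Nm b fr.[_]); exact: scale0r.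
  rewrite horner_coef0 coef_poly (leq_trans _ sp) // subn0.
  by apply: (Nm_neq0 hb); rewrite -lead_coefE lead_coef_eq0.
have := congr1 (horner^~ 0) F0.
rewrite /F !hornerE expr0n /=.
have -> : (s * n.+1 * 2 == 0)%N = false by apply/eqP; rewrite /s; nia.
rewrite mulr0n subr0 => /eqP; rewrite mulf_eq0 expf_eq0 (negPf Q0) andbF.
by [].
Qed.

End Schur.

Section Rclos.
Variable K : fieldExtType rat.
Implicit Types f g : {poly K}.

Lemma R_add f g : in_IntOK f -> in_IntOK g -> in_IntOK (f + g).
Proof. by move=> hf hg a ha; rewrite hornerD; apply: OK_add; [apply: hf | apply: hg]. Qed.
Lemma R_mul f g : in_IntOK f -> in_IntOK g -> in_IntOK (f * g).
Proof. by move=> hf hg a ha; rewrite hornerM; apply: OK_mul; [apply: hf | apply: hg]. Qed.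
Lemma R_opp f : in_IntOK f -> in_IntOK (- f).
Proof. by move=> hf a ha; rewrite hornerN; apply: OK_opp; apply: hf. Qed.
Lemma R_sub f g : in_IntOK f -> in_IntOK g -> in_IntOK (f - g).
Proof. by move=> hf hg; apply: R_add => //; apply: R_opp. Qed.
Lemma R_C (c : K) : in_OK c -> in_IntOK c%:P.
Proof. by move=> hc a _; rewrite hornerC. Qed.
Lemma R_1 : in_IntOK (1 : {poly K}).
Proof. by rewrite -polyC1; apply: R_C; exact: OK1. Qed.
Lemma R_X : in_IntOK ('X : {poly K}).
Proof. by move=> a ha; rewrite hornerX. Qed.
Lemma R_exp f k : in_IntOK f -> in_IntOK (f ^+ k).
Proof.
move=> hf; elim: k => [|k IH]; first by rewrite expr0; exact: R_1.
by rewrite exprS; apply: R_mul.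
Qed.

End Rclos.

Unset Implicit Arguments.

Theorem mainTheorem3 (K : fieldExtType rat) (p : {poly K}) : ~ IntOK_prime p.
Proof.
case=> pR pnz pnu pprime.
have [n hn] : exists n, \dim {:K} = n.+1.
  by exists (\dim {:K}).-1; rewrite prednK // adim_gt0.
pose b : n.+1.-tuple K := tcast hn (vbasis fullv).
have hb : basis_of fullv b by rewrite /b val_tcast; exact: vbasisP.
have dvd_mulX k (Y : {poly K}) : in_IntOK Y -> IntOK_dvd p ('X^k * Y) ->
    IntOK_dvd p 'X \/ IntOK_dvd p Y.
  elim: k Y => [|k IH] Y hY h; first by right; rewrite expr0 mul1r in h.
  rewrite exprS -mulrA in h.
  case: (pprime _ _ (@R_X K) (R_mul (R_exp k (@R_X K)) hY) h) => [|h2]; first by left.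
  exact: IH.
case: (leqP (size p) 1) => sp.
- have Ep : p = (p`_0)%:P by apply: size1_polyC.
  set c := p`_0 in Ep.
  have cOK : in_OK c by have := pR 0 (OK0 K); rewrite horner_coef0.
  have c0 : c != 0 by apply/eqP=> c0; apply: pnz; rewrite Ep c0.
  have nou : ~ in_OK c^-1.
    move=> h; apply: pnu; exists (c^-1)%:P; split; first exact: R_C.
    by rewrite Ep -polyCM divff // polyC1.
  have [N [N0 hN]] := OK_div_nat hb cOK c0.
  have NK : (N%:R : K) != 0 := natr_neq0 K N0.
  have [k [m [m0 hU]]] := U_lemma hb N0.
  pose W : {poly K} := ('X^k * ('X^m - 1)) * (N%:R^-1)%:P.
  have WR : in_IntOK W.
    move=> a ha; rewrite /W !hornerE; exact: hU.
  have hd : IntOK_dvd p ('X^k * ('X^m - 1)).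
    exists (W * (N%:R / c)%:P); split; first by apply: R_mul => //; apply: R_C.
    have e : c * (N%:R^-1 * (N%:R / c)) = 1 by field; rewrite c0 NK.
    have euv : c%:P * ((N%:R^-1)%:P * (N%:R / c)%:P) = 1.
      by rewrite -!polyCM e polyC1.
    by rewrite Ep /W -[LHS]mulr1 -euv; ring.
  case: (dvd_mulX k _ (R_sub (R_exp m (@R_X K)) (@R_1 K)) hd) => [[h [hR hX]] | [h [hR hX]]].
  + apply: nou.
    have := congr1 (horner^~ 1) hX; rewrite Ep !hornerE => e1.
    have -> : c^-1 = h.[1] by apply: (mulfI c0); rewrite -e1 mulfV.
    by apply: hR; exact: OK1.
  + apply: nou.
    have := congr1 (horner^~ 0) hX; rewrite Ep !hornerE expr0n eqn0Ngt m0 /= => e1.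
    have -> : c^-1 = - h.[0].
      by apply: (mulfI c0); rewrite mulrN -e1 divff // sub0r opprK.
    by apply: OK_opp; apply: hR; exact: OK0.
- have [a [ba0 bnu]] := schur hb pR sp.
  set be := p.[a%:R] in ba0 bnu *.
  have beOK : in_OK be by apply: pR; exact: OK_nat.
  have [N [N0 hN]] := OK_div_nat hb beOK ba0.
  have NK : (N%:R : K) != 0 := natr_neq0 K N0.
  have [k [m [m0 hU]]] := U_lemma hb N0.
  have L1 (H : {poly K}) : in_IntOK (p * H) -> in_IntOK (N%:R%:P * H) -> in_IntOK H.
    move=> h1 h2.
    have hd : IntOK_dvd p (N%:R%:P * (p * H)).
      by exists (N%:R%:P * H); split => //; rewrite mulrCA.
    case: (pprime _ _ (R_C (OK_nat K N)) h1 hd) => [[h [_ hh]] | [h [hR hh]]].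
      exfalso.
      have h0 : h != 0 by apply/eqP=> h0; move: hh; rewrite h0 mulr0 => /eqP; rewrite polyC_eq0 (negPf NK).
      have pnz' : p != 0 by apply/eqP.
      have := congr1 (fun q : {poly K} => size q) hh; rewrite size_polyC NK size_mul //.
      have : (0 < size h)%N by rewrite size_poly_gt0.
      move=> hpos e; have e' : (size p + size h).-1 = 1%N by rewrite -e.
      lia.
    by have -> : H = h by apply: (mulfI (introN eqP pnz)).
  pose G : {poly K} := (p ^+ m - 1) * (N%:R^-1)%:P.
  have GR j : in_IntOK (p ^+ j * G) -> in_IntOK G.
    elim: j => [|j IH] h; first by rewrite expr0 mul1r in h.
    apply: IH; apply: L1; first by rewrite mulrA -exprS.
    have -> : N%:R%:P * (p ^+ j * G) = p ^+ j * (p ^+ m - 1).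
      have ee : (N%:R%:P : {poly K}) * (N%:R^-1)%:P = 1.
        by rewrite -polyCM mulfV // polyC1.
      transitivity (p ^+ j * (p ^+ m - 1) * (N%:R%:P * (N%:R^-1)%:P)).
        by rewrite /G; ring.
      by rewrite ee mulr1.
    by apply: R_mul; [apply: R_exp | apply: R_sub; [apply: R_exp | exact: R_1]].
  have hk : in_IntOK (p ^+ k * G).
    move=> x hx; rewrite /G !hornerE; apply: hU; exact: pR.
  have GOK := GR k hk (a%:R) (OK_nat K a).
  have e : be^-1 = be ^+ m.-1 - G.[a%:R] * (N%:R / be).
    have eG : G.[a%:R] = (be ^+ m - 1) * N%:R^-1 by rewrite /G !hornerE.
    rewrite eG; case: (m) m0 => // mm _; rewrite exprS /=.
    by field; rewrite ba0 NK.
  by apply: bnu; rewrite e; apply: OK_sub; [apply: OK_exp | apply: OK_mul].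
Qed.
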